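(* Let $\mathbb{K}=(G,M,I)$ be a formal context and $A,B\in\operatorname{Ext}(\mathbb{K})$ with $A\prec_{\operatorname{Ext}(\mathbb{K})}B$. If $A$ is meet-irreducible in $\operatorname{Ext}(\mathbb{K})$, then $\mathcal{F}_{A,B}\cap\operatorname{Ext}(\mathbb{K})$ is a maximal meet-irreducible element of the lattice ${\downarrow}\operatorname{Ext}(\mathbb{K})$ of all closure systems on $G$ contained in $\operatorname{Ext}(\mathbb{K})$, ordered by inclusion.
   Context: A formal context is a triple $(G,M,I)$ with finite nonempty sets $G$, $M$ and $I\subseteq G\times M$; derivations $A'=\{m\mid\forall a\in A:(a,m)\in I\}$, $B'=\{g\mid\forall b\in B:(g,b)\in I\}$. $\operatorname{Ext}(\mathbb{K})=\{A\subseteq G\mid A''=A\}$, a lattice under inclusion with meet = intersection. A closure system on $G$ is a family of subsets of $G$ containing $G$ and closed under intersections. $\prec_{\operatorname{Ext}(\mathbb{K})}$ is the covering relation of $(\operatorname{Ext}(\mathbb{K}),\subseteq)$. $\mathcal{F}_{A,B}=\{D\subseteq G\mid A\not\subseteq D\ \text{or}\ B\subseteq D\}$. An element $x$ of a lattice is meet-irreducible if $x\neq\top$ and $x=\bigwedge Y$ implies $x\in Y$. *)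

(* Defs.v *)
From mathcomp Require Import all_boot.
Set Implicit Arguments. Unset Strict Implicit. Unset Printing Implicit Defensive.

Section FCA.
Variables (G M : finType) (I : {set G * M}).

Definition derG (A : {set G}) : {set M} := [set m | [forall a in A, (a, m) \in I]].
Definition derM (B : {set M}) : {set G} := [set g | [forall b in B, (g, b) \in I]].

Definition Ext : {set {set G}} := [set A | derM (derG A) == A].

Definition FAB (A B : {set G}) : {set {set G}} :=
  [set D : {set G} | ~~ (A \subset D) || (B \subset D)].
End FCA.

Definition closure_system (G : finType) (C : {set {set G}}) : bool :=
  ([set: G] \in C) &&
  [forall F : {set {set G}}, (F \subset C) ==> (\bigcap_(X in F) X \in C)].

Definition covers (T : finType) (L : {set {set T}}) (x y : {set T}) : Prop :=
  [/\ x \in L, y \in L, x \proper y &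
      forall z, z \in L -> x \proper z -> ~ z \proper y].

Definition is_inf (T : finType) (L : {set {set T}}) (Y : {set {set T}})
  (x : {set T}) : Prop :=
  [/\ x \in L, (forall y, y \in Y -> x \subset y) &
      forall z, z \in L -> (forall y, y \in Y -> z \subset y) -> z \subset x].

Definition is_top (T : finType) (L : {set {set T}}) (x : {set T}) : Prop :=
  x \in L /\ forall z, z \in L -> z \subset x.

Definition meet_irreducible (T : finType) (L : {set {set T}}) (x : {set T}) : Prop :=
  [/\ x \in L, ~ is_top L x &
      forall Y : {set {set T}}, Y \subset L -> is_inf L Y x -> x \in Y].

Definition maximal_meet_irreducible (T : finType) (L : {set {set T}}) (x : {set T}) : Prop :=
  meet_irreducible L x /\
  forall y, meet_irreducible L y -> x \subset y -> y = x.

Definition downExt (G M : finType) (I : {set G * M}) : {set {set {set G}}} :=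
  [set C | closure_system C && (C \subset Ext I)].

(* Main.v *)
Require Import Defs.
From mathcomp Require Import all_boot.
Set Implicit Arguments. Unset Strict Implicit. Unset Printing Implicit Defensive.

Section Aux.
Variables (G M : finType) (I : {set G * M}).

Lemma derG_anti (S T : {set G}) : S \subset T -> derG I T \subset derG I S.
Proof.
move=> ST; apply/subsetP=> m; rewrite !inE => /forall_inP H.
apply/forall_inP=> a aS; exact: H (subsetP ST a aS).
Qed.

Lemma derM_anti (S T : {set M}) : S \subset T -> derM I T \subset derM I S.
Proof.
move=> ST; apply/subsetP=> m; rewrite !inE => /forall_inP H.
apply/forall_inP=> a aS; exact: H (subsetP ST a aS).
Qed.

Lemma ext_sub (S : {set G}) : S \subset derM I (derG I S).
Proof.
apply/subsetP => g gS; rewrite inE; apply/forall_inP => m.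
rewrite inE => /forall_inP H; exact: H.
Qed.

Lemma mono (S T : {set G}) : S \subset T -> derM I (derG I S) \subset derM I (derG I T).
Proof. by move=> ST; apply: derM_anti; apply: derG_anti. Qed.

Lemma Ext_bigcap (F : {set {set G}}) : F \subset Ext I -> \bigcap_(X in F) X \in Ext I.
Proof.
move=> sub; rewrite inE eqEsubset ext_sub andbT.
apply/bigcapsP => X XF. have XE := subsetP sub X XF.
rewrite inE in XE; apply: subset_trans (_ : _ \subset derM I (derG I X)) _; [apply: mono; exact: bigcap_inf | by rewrite (eqP XE)].
Qed.

Lemma Ext_setI (X Y : {set G}) : X \in Ext I -> Y \in Ext I -> X :&: Y \in Ext I.
Proof.
rewrite !inE => /eqP EX /eqP EY; rewrite eqEsubset ext_sub andbT subsetI.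
apply/andP; split.
  by apply: subset_trans (_ : _ \subset derM I (derG I X)) _; [apply: mono; exact: subsetIl | rewrite EX].
by apply: subset_trans (_ : _ \subset derM I (derG I Y)) _; [apply: mono; exact: subsetIr | rewrite EY].
Qed.

Lemma Ext_T : [set: G] \in Ext I.
Proof. by rewrite inE eqEsubset subsetT ext_sub. Qed.

Lemma inFAB (A B D : {set G}) : (D \in FAB A B) = ~~ (A \subset D) || (B \subset D).
Proof. by rewrite inE. Qed.
End Aux.

Theorem proposition5 (G M : finType) (I : {set G * M})
  (HG : 0 < #|G|) (HM : 0 < #|M|) (A B : {set G}) :
  A \in Ext I -> B \in Ext I ->
  covers (Ext I) A B ->
  meet_irreducible (Ext I) A ->
  maximal_meet_irreducible (downExt I) (FAB A B :&: Ext I).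
Proof.
move=> AE BE [_ _ AB Hcov] [_ _ Hmi].
set X := FAB A B :&: Ext I.
have nBA : ~~ (B \subset A).
  by apply/negP => BA; move: AB; rewrite properE BA andbF.
have K : forall D, D \in Ext I -> A \subset D -> ~~ (B \subset D) -> D = A.
  move=> D DE AD nBD.
  have DBE := Ext_setI DE BE.
  have DBA : D :&: B = A.
    apply/eqP; rewrite eq_sym eqEproper subsetI AD (proper_sub AB) /=.
    apply/negP => APDB; apply: (Hcov _ DBE APDB).
    rewrite properEneq subsetIr andbT; apply/negP => /eqP E.
    by move: nBD; rewrite -E subsetIl.
  have : A \in [set D; B].
    apply: Hmi.
      by apply/subsetP => Z; rewrite in_set2 => /orP [] /eqP ->.
    split => //.
      by move=> y; rewrite in_set2 => /orP [] /eqP ->; [exact: AD | exact: proper_sub].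
    move=> z zE Hz; rewrite -DBA subsetI Hz ?Hz // in_set2 eqxx ?orbT //.
  rewrite in_set2 => /orP [] /eqP // E.
  by move: AB; rewrite E properxx.
have XE : X \subset Ext I by exact: subsetIr.
have AnX : A \notin X.
  by rewrite in_setI inFAB subxx /= (negbTE nBA).
have K1 : forall C : {set {set G}}, C \subset Ext I -> X \subset C -> C != X -> Ext I \subset C.
  move=> C CE XC nCX.
  have [D DC DnX] : exists2 D, D \in C & D \notin X.
    apply/subsetPn; apply/negP => CX.
    by move/negP: nCX; apply; rewrite eqEsubset CX XC.
  have DE := subsetP CE D DC.
  have DA : D = A.
    move: DnX; rewrite in_setI inFAB DE andbT negb_or negbK => /andP [AD nBD].
    exact: K.
  apply/subsetP => Z ZE; case: (boolP (Z \in X)) => [/(subsetP XC) //|ZnX].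
  move: ZnX; rewrite in_setI inFAB ZE andbT negb_or negbK => /andP [AZ nBZ].
  by rewrite (K Z ZE AZ nBZ) -DA.
have ExtL : Ext I \in downExt I.
  rewrite inE subxx andbT /closure_system Ext_T /=.
  by apply/forall_inP => F; apply: Ext_bigcap.
have XL : X \in downExt I.
  rewrite inE XE andbT /closure_system in_setI inFAB Ext_T !subsetT orbT /=.
  apply/forall_inP => F FX; rewrite in_setI inFAB Ext_bigcap ?(subset_trans FX XE) // andbT.
  case: (boolP (A \subset _)) => //= AF; apply/bigcapsP => Z ZF.
  have := subsetP FX Z ZF; rewrite in_setI inFAB => /andP [/orP [] // nAZ _].
  by move: nAZ; rewrite (subset_trans AF (bigcap_inf _ ZF)).
have Xmi : meet_irreducible (downExt I) X.
  split => //.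
    move=> [_ Htop]; move: (Htop _ ExtL) => /subsetP /(_ A AE).
    by rewrite (negbTE AnX).
  move=> Y YL [_ Hlow Hgl]; apply/negPn/negP => XnY.
  have EC : forall C, C \in Y -> Ext I \subset C.
    move=> C CY; have := subsetP YL C CY; rewrite inE => /andP [_ CE].
    apply: K1 => //; first exact: Hlow.
    by apply/negP => /eqP E; move: XnY; rewrite -E CY.
  have := Hgl _ ExtL EC => /subsetP /(_ A AE).
  by rewrite (negbTE AnX).
split => // y [yL ntop _] Xy; apply/eqP/negPn/negP => nyX; apply: ntop.
have yE : y \subset Ext I by move: yL; rewrite inE => /andP [].
have Ey := K1 _ yE Xy nyX.
split => // z; rewrite inE => /andP [_ zE]; exact: subset_trans zE Ey.
Qed.
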